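(* The monoid $M := \langle x,y,z \mid (xy,\, yzx)\rangle$ is cancellative and BF, and $\rho(M) = 2$, but $M$ does not have accepted elasticity.
   Context: $M$ is the monoid with generators $x,y,z$ subject to the single relation $xy=yzx$; $\langle x,y,z\rangle$ is the free monoid on these letters. $|a|$ is word length; $a=_M b$ means equal images in $M$. $\mathsf{L}_M(a):=\{|b| : b\in\langle x,y,z\rangle,\ b=_M a\}$, $\mathcal{L}(M):=\{\mathsf{L}_M(a)\}$. $M$ is BF if every $\mathsf{L}_M(a)$ is finite; cancellative if $ab=ac$ or $ba=ca$ implies $b=c$. For $L\subseteq\mathbb{N}$, $\rho(L):=\sup(L\cap\mathbb{N}^+)/\min(L\cap\mathbb{N}^+)$ if $L\cap\mathbb{N}^+\ne\emptyset$, and $0$ otherwise; $\rho(M):=\sup\{\rho(L):L\in\mathcal{L}(M)\}$. $M$ has accepted elasticity if $\rho(M)=\rho(L)<\infty$ for some $L\in\mathcal{L}(M)$. *)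

(* Defs.v *)
From mathcomp Require Import all_boot all_order all_algebra.
From mathcomp Require Import all_classical all_reals ereal.
Set Implicit Arguments. Unset Strict Implicit. Unset Printing Implicit Defensive.
Import Order.TTheory GRing.Theory Num.Theory.
Local Open Scope classical_set_scope.
Local Open Scope ereal_scope.

Inductive letter := X | Y | Z.

Definition word := seq letter.

Inductive meq : word -> word -> Prop :=
| meq_step (u v : word) : meq (u ++ [:: X; Y] ++ v) (u ++ [:: Y; Z; X] ++ v)
| meq_refl (a : word) : meq a a
| meq_sym (a b : word) : meq a b -> meq b a
| meq_trans (a b c : word) : meq a b -> meq b c -> meq a c.

Definition LM (a : word) : set nat := [set n | exists b : word, meq b a /\ size b = n].

Definition LLM : set (set nat) := [set LM a | a in [set: word]].

Definition BF : Prop := forall a : word, finite_set (LM a).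

Definition cancellative : Prop :=
  forall a b c : word,
    (meq (a ++ b) (a ++ c) -> meq b c) /\ (meq (b ++ a) (c ++ a) -> meq b c).

Definition posPart (L : set nat) : set nat := [set n | L n /\ (0 < n)%N].

(* the minimum of a set of naturals (chosen classically; meaningful when nonempty) *)
Definition nmin (L : set nat) : nat := xget 0%N [set m | L m /\ forall k, L k -> (m <= k)%N].

Definition rho_set (R : realType) (L : set nat) : \bar R :=
  if `[< posPart L !=set0 >] then
    ereal_sup [set (n%:R)%:E | n in posPart L] * ((nmin (posPart L))%:R^-1)%:E
  else 0.

Definition rho_M (R : realType) : \bar R := ereal_sup [set rho_set R L | L in LLM].

Definition accepted_elasticity (R : realType) : Prop :=
  exists2 L, LLM L & rho_M R = rho_set R L /\ rho_M R < +oo.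

(* Main.v *)
Require Import Defs.
From mathcomp Require Import all_boot all_order all_algebra.
From mathcomp Require Import all_classical all_reals ereal.
From mathcomp Require Import zify.
Set Implicit Arguments. Unset Strict Implicit. Unset Printing Implicit Defensive.

Fixpoint push (v : word) : word :=
  match v with
  | Y :: v' => Y :: Z :: push v'
  | _ => X :: v
  end.
Definition ins (l : letter) (v : word) : word :=
  match l with X => push v | _ => l :: v end.
Fixpoint nf (w : word) : word :=
  match w with [::] => [::] | l :: w' => ins l (nf w') end.
Fixpoint lead (v : word) : nat :=
  match v with Y :: v' => (lead v').+1 | _ => 0%N end.

Lemma meq_catl p a b : meq a b -> meq (p ++ a) (p ++ b).
Proof.
elim=> [u v| c | c d _ IH | c d e _ IH1 _ IH2].
- by have := meq_step (p ++ u) v; rewrite -!catA.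
- exact: meq_refl.
- exact: meq_sym.
- exact: meq_trans IH2.
Qed.

Lemma meq_catr q a b : meq a b -> meq (a ++ q) (b ++ q).
Proof.
elim=> [u v| c | c d _ IH | c d e _ IH1 _ IH2].
- by have := meq_step u (v ++ q); rewrite -!catA.
- exact: meq_refl.
- exact: meq_sym.
- exact: meq_trans IH2.
Qed.

Lemma meq_push v : meq (X :: v) (push v).
Proof.
elim: v => [|l v IH] /=; first exact: meq_refl.
case: l; try exact: meq_refl.
apply: meq_trans (_ : meq [:: Y, Z, X & v] _).
  exact: (meq_step [::] v).
exact: (meq_catl [:: Y; Z] IH).
Qed.

Lemma meq_nf w : meq w (nf w).
Proof.
elim: w => [|l w IH] /=; first exact: meq_refl.
apply: meq_trans (meq_catl [:: l] IH) _.
by case: l => /=; [exact: meq_push | exact: meq_refl | exact: meq_refl].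
Qed.

Lemma nf_cat u w : nf (u ++ w) = foldr ins (nf w) u.
Proof. by elim: u => //= l u ->. Qed.

Lemma nf_eq a b : meq a b -> nf a = nf b.
Proof.
elim=> [u v | c | c d _ -> | c d e _ -> _ ->] //.
by rewrite !nf_cat.
Qed.

Lemma meqE a b : meq a b <-> nf a = nf b.
Proof.
split; first exact: nf_eq.
move=> E; apply: meq_trans (meq_nf a) _; rewrite E; exact: meq_sym (meq_nf b).
Qed.

Lemma push_inj : injective push.
Proof.
elim=> [|l v IH] [|l' w] //=.
- by case: l' => //.
- by case: l.
- case: l; case: l' => //= E; try by case: E.
  all: case: E => E; first [by rewrite E | by rewrite (IH _ E)].
Qed.

Lemma ins_inj l : injective (ins l).
Proof. case: l => a b /=; [exact: push_inj | by case | by case]. Qed.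

Lemma left_cancel a b c : meq (a ++ b) (a ++ c) -> meq b c.
Proof.
rewrite !meqE !nf_cat; elim: a => //= l a IH E; apply: IH; exact: ins_inj E.
Qed.

Definition sw (l : letter) := match l with X => Y | Y => X | Z => Z end.
Definition phi (w : word) : word := rev (map sw w).

Lemma phi_cat a b : phi (a ++ b) = phi b ++ phi a.
Proof. by rewrite /phi map_cat rev_cat. Qed.

Lemma phiK w : phi (phi w) = w.
Proof. rewrite /phi map_rev revK -map_comp; elim: w => //= l w ->; by case: l. Qed.

Lemma meq_phi a b : meq a b -> meq (phi a) (phi b).
Proof.
elim=> [u v| c | c d _ IH | c d e _ IH1 _ IH2].
- rewrite !phi_cat -!catA; exact: meq_step.
- exact: meq_refl.
- exact: meq_sym.
- exact: meq_trans IH2.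
Qed.

Lemma right_cancel a b c : meq (b ++ a) (c ++ a) -> meq b c.
Proof.
move/meq_phi; rewrite !phi_cat => /left_cancel /meq_phi; by rewrite !phiK.
Qed.

Lemma cancellativeP : cancellative.
Proof. move=> a b c; split; [exact: left_cancel | exact: right_cancel]. Qed.

Lemma size_nf w : (size w <= size (nf w))%N.
Proof.
elim: w => //= l w IH; case: l => /=; last 2 first; try by rewrite ltnS.
have H v : (size v < size (push v))%N by elim: v => //= [[]] //= v; lia.
exact: leq_ltn_trans IH (H _).
Qed.

Lemma BFP : BF.
Proof.
move=> a; apply: (@sub_finite_set _ _ `I_(size (nf a)).+1); last exact: finite_II.
move=> n [b [/nf_eq E <-]] /=; rewrite ltnS -E; exact: size_nf.
Qed.

Lemma size_push v : size (push v) = (size v + lead v + 1)%N.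
Proof. elim: v => //= l v IH; case: l => //=; rewrite ?IH; lia. Qed.

Lemma lead_push v : (lead (push v) <= 1)%N.
Proof. by case: v => //= -[]. Qed.

Lemma nf_bound w : (size (nf w) + lead (nf w) <= 2 * size w)%N.
Proof.
elim: w => //= l w IH; case: l => /=.
- have := lead_push (nf w); rewrite size_push; lia.
- lia.
- lia.
Qed.

Lemma nf_lt w : (0 < size w)%N -> (size (nf w) < 2 * size w)%N.
Proof.
case: w => //= l w _; have := nf_bound w; case: l => /=; rewrite ?size_push; lia.
Qed.

Lemma class_lt b c : meq c b -> (0 < size b)%N -> (size c < 2 * size b)%N.
Proof.
move=> /nf_eq E /nf_lt; apply: leq_ltn_trans; rewrite -E; exact: size_nf.
Qed.

Definition isX (l : letter) := if l is X then true else false.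
Definition isY (l : letter) := if l is Y then true else false.

Lemma meq_count a b : meq a b -> count isX a = count isX b /\ count isY a = count isY b.
Proof.
elim=> [u v| c | c d _ [-> ->] | c d e _ [-> ->] _ [-> ->]] //.
by rewrite !count_cat /=; split; lia.
Qed.

Lemma count_size w : (count isX w + count isY w <= size w)%N.
Proof. elim: w => //= l w; case: l => /=; lia. Qed.

Lemma nf_nseq n : nf (nseq n Y) = nseq n Y.
Proof. by elim: n => //= n ->. Qed.

Lemma size_nf_an n : size (nf (X :: nseq n Y)) = (2 * n + 1)%N.
Proof.
rewrite /= nf_nseq size_push size_nseq.
have -> : lead (nseq n Y) = n by elim: n => //= n ->.
by rewrite mul2n -addnn.
Qed.

Lemma class_an n c : meq c (X :: nseq n Y) -> (n.+1 <= size c)%N.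
Proof.
move=> /meq_count [E1 E2]; have := count_size c; rewrite E1 E2 /=; clear E1 E2.
have -> : count isY (nseq n Y) = n by elim: n => //= n ->.
have -> : count isX (nseq n Y) = 0%N by elim: n.
by rewrite add0n.
Qed.

Import Order.TTheory GRing.Theory Num.Theory.
Local Open Scope ring_scope.
Local Open Scope classical_set_scope.

Lemma nmin_spec (L : set nat) m : L m -> (forall k, L k -> (m <= k)%N) -> nmin L = m.
Proof.
move=> Lm mmin; rewrite /nmin.
have [] := @xgetPex _ 0%N [set m | L m /\ forall k, L k -> (m <= k)%N].
  by exists m.
move=> L1 H1; apply/eqP; rewrite eqn_leq H1 //=; exact: mmin.
Qed.

Lemma nmin_ex (L : set nat) n : L n -> L (nmin L) /\ (forall k, L k -> (nmin L <= k)%N).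
Proof.
move=> Ln.
have ex : exists k, `[< L k >] by exists n; exact: asboolT.
case: (ex_minnP ex) => m /asboolP Lm mmin.
have mm : forall k, L k -> (m <= k)%N by move=> k Lk; apply: mmin; apply: asboolT.
by rewrite (@nmin_spec L m).
Qed.

Section Real.
Variable R : realType.

Lemma rho_lt2 (a : word) : (rho_set R (LM a) < 2%:E)%E.
Proof.
rewrite /rho_set; case: (pselect (posPart (LM a) !=set0)) => ne; last first.
  by rewrite asboolF // lte_fin.
rewrite asboolT //; case: ne => n Pn.
have [[[b [ba bm]] mpos] mmin] := nmin_ex Pn.
set m := nmin _ in ba bm mpos mmin *.
have sup_le : (ereal_sup [set (n%:R)%:E | n in posPart (LM a)] <= ((2 * m - 1)%N%:R : R)%:E)%E.
  apply/ereal_supP => y [k [[c [ca <-]] _] <-].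
  rewrite lee_fin ler_nat.
  have := @class_lt b c (meq_trans ca (meq_sym ba)); rewrite bm => /(_ mpos); lia.
apply: (le_lt_trans (lee_wpmul2r _ sup_le)).
  by rewrite lee_fin invr_ge0.
rewrite -EFinM lte_fin.
have m0 : 0 < (m%:R : R) by rewrite ltr0n.
rewrite ltr_pdivrMr // -natrM ltr_nat; lia.
Qed.

Lemma rho_an n : ((((2 * n + 1)%N%:R : R) / (n.+1)%:R)%:E <= rho_set R (LM (X :: nseq n Y)))%E.
Proof.
have Pn : posPart (LM (X :: nseq n Y)) n.+1.
  split=> //; exists (X :: nseq n Y); split; [exact: meq_refl | by rewrite /= size_nseq].
rewrite /rho_set asboolT; last by exists n.+1.
rewrite (@nmin_spec _ n.+1) //; last first.
  by move=> k [[c [ca <-]] _]; exact: class_an.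
rewrite EFinM; apply: lee_wpmul2r; first by rewrite lee_fin invr_ge0.
apply: ereal_sup_ubound; exists (2 * n + 1)%N => //.
split; last by lia.
exists (nf (X :: nseq n Y)); split; [exact: meq_sym (meq_nf _) | exact: size_nf_an].
Qed.

End Real.

Lemma rhoM2 (R : realType) : rho_M R = 2%:E.
Proof.
have ub : (rho_M R <= 2%:E)%E.
  apply/ereal_supP => y [L [a _ <-] <-]; exact: ltW (rho_lt2 R a).
have lb n : ((((2 * n + 1)%N%:R : R) / (n.+1)%:R)%:E <= rho_M R)%E.
  apply: le_trans (rho_an R n) _; apply: ereal_sup_ubound.
  by exists (LM (X :: nseq n Y)) => //; exists (X :: nseq n Y).
apply/eqP; rewrite eq_le ub /=.
move: ub (lb 0%N); case Er: (rho_M R) => [r| |] //= ub lb0.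
change (2%:E <= r%:E)%E; rewrite lee_fin leNgt; apply/negP => r2.
have [k Hk] := ltr_add_invr r2.
have := lb k; rewrite Er lee_fin => H.
have e : ((2 * k + 1)%N%:R : R) / (k.+1)%:R = 2 - (k.+1)%:R^-1.
  have k0 : (k.+1)%:R != 0 :> R by rewrite pnatr_eq0.
  apply: (mulIf k0); rewrite mulrBl divfK // mulVf // -natrM.
  have -> : (2 * k + 1 = 2 * k.+1 - 1)%N by lia.
  rewrite natrB ?muln_gt0 // natrM; lia.
rewrite e in H; move: Hk; rewrite ltNge => /negP; apply.
by rewrite -lerBlDr.
Qed.

Theorem proposition6p3 (R : realType) :
  cancellative /\ BF /\ rho_M R = 2%:E /\ ~ accepted_elasticity R.
Proof.
split; first exact: cancellativeP.
split; first exact: BFP.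
split; first exact: rhoM2.
move=> [L [a _ <-] [E _]]; have := rho_lt2 R a; by rewrite -E rhoM2 ltxx.
Qed.
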